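(* Let $\mathfrak{b}\subset\mathfrak{g}=\mathfrak{gl}(n+1,\mathbb{C})$ be a Borel subalgebra containing the Cartan subalgebra of diagonal matrices. Then $\mathfrak{b}$ contains strongly regular elements of $\mathfrak{g}$.
   Context: For $x\in\mathfrak{g}$ and $1\le i\le n+1$, $x_i$ denotes the upper left $i\times i$ submatrix of $x$, and $f_{i,j}(x)=\mathrm{Tr}(x_i^j)$ for $1\le j\le i\le n+1$. An element $x\in\mathfrak{g}$ is strongly regular if the differentials $\{df_{i,j}(x):1\le j\le i\le n+1\}$ are linearly independent in $T_x^*\mathfrak{g}$. *)

(* Defs.v *)
From HB Require Import structures.
From mathcomp Require Import all_boot all_order all_algebra.
From mathcomp Require Import Rstruct complex.
From mathcomp Require Import mpoly.
From Stdlib Require Rdefinitions.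
Set Implicit Arguments. Unset Strict Implicit. Unset Printing Implicit Defensive.
Import Order.TTheory GRing.Theory Num.Theory.
Local Open Scope ring_scope.

Definition C : Type := complex Rdefinitions.R.

Definition lie_bracket (n : nat) (x y : 'M[C]_n) : 'M[C]_n := x *m y - y *m x.

Definition is_lie_subalgebra (n : nat) (S : {vspace 'M[C]_n}) : Prop :=
  forall x y, x \in S -> y \in S -> lie_bracket x y \in S.

(* Derived algebra [S,S]: the span of all brackets of elements of S
   (by bilinearity, spanned by the brackets of basis vectors). *)
Definition derived (n : nat) (S : {vspace 'M[C]_n}) : {vspace 'M[C]_n} :=
  <<[seq lie_bracket x y | x <- vbasis S, y <- vbasis S]>>%VS.

Definition is_solvable (n : nat) (S : {vspace 'M[C]_n}) : Prop :=
  exists k : nat, iter k (@derived n) S = 0%VS.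

Definition is_borel (n : nat) (S : {vspace 'M[C]_n}) : Prop :=
  [/\ is_lie_subalgebra S, is_solvable S &
      forall S' : {vspace 'M[C]_n},
        is_lie_subalgebra S' -> is_solvable S' -> (S <= S')%VS -> S' = S].

Definition contains_diagonal_cartan (n : nat) (S : {vspace 'M[C]_n}) : Prop :=
  forall d : 'rV[C]_n, diag_mx d \in S.

(* Coordinates on g: the polynomial ring in the (n+1)^2 matrix entries;
   variable number mxvec_index i j is the (i,j) entry. *)
Definition coordR (N : nat) := {mpoly C[N * N]}.

Definition genmx (N : nat) : 'M[coordR N]_N :=
  \matrix_(i < N, j < N) 'X_(mxvec_index i j).

Definition ulsub (T : Type) (N : nat) (i : 'I_N) (x : 'M[T]_N) : 'M[T]_(i.+1) :=
  \matrix_(a < i.+1, b < i.+1) x (widen_ord (ltn_ord i) a) (widen_ord (ltn_ord i) b).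

(* Index set {(i,j) : 1 <= j <= i <= N}, encoded 0-based:
   p = (i', j') : 'I_N * 'I_N with j' <= i' stands for (i, j) = (i'+1, j'+1). *)
Definition GZindex (N : nat) : finType :=
  {p : 'I_N * 'I_N | (p.2 <= p.1)%N}.

Definition fGZ (N : nat) (p : GZindex N) : coordR N :=
  let: (i, j) := val p in \tr ((ulsub i (genmx N)) ^+ j.+1).

(* the point x as a valuation of the coordinate variables:
   coords x (mxvec_index i j) = x i j *)
Definition coords (N : nat) (x : 'M[C]_N) : 'I_(N * N) -> C :=
  fun k => mxvec x 0 k.

(* the differential df_{i,j}(x) in T_x^* g, written in the dual basis of the
   coordinates: the row vector of partial derivatives at x *)
Definition dGZ (N : nat) (p : GZindex N) (x : 'M[C]_N) : 'rV[C]_(N * N) :=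
  \row_(k < N * N) (mderiv k (fGZ p)).@[coords x].

Definition strongly_regular (N : nat) (x : 'M[C]_N) : Prop :=
  forall c : GZindex N -> C,
    \sum_(p : GZindex N) c p *: dGZ p x = 0 -> forall p, c p = 0.

(* Main.v *)
Require Import Defs.
From HB Require Import structures.
From mathcomp Require Import all_boot all_order all_algebra.
From mathcomp Require Import Rstruct complex mpoly.
From mathcomp Require Import zify ring.
Set Implicit Arguments. Unset Strict Implicit. Unset Printing Implicit Defensive.
Import Order.TTheory GRing.Theory Num.Theory.
Local Open Scope ring_scope.

Section Bracket.
Variable N : nat.
Implicit Types (x y z : 'M[C]_N) (S W : {vspace 'M[C]_N}).

Lemma brDl x y z : lie_bracket (x + y) z = lie_bracket x z + lie_bracket y z.
Proof. rewrite /lie_bracket mulmxDl mulmxDr; rewrite addrACA opprD //. Qed.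

Lemma brDr x y z : lie_bracket x (y + z) = lie_bracket x y + lie_bracket x z.
Proof. rewrite /lie_bracket mulmxDl mulmxDr addrACA opprD //. Qed.

Lemma brZl a x y : lie_bracket (a *: x) y = a *: lie_bracket x y.
Proof. by rewrite /lie_bracket scalerBr -scalemxAl -scalemxAr. Qed.

Lemma brZr a x y : lie_bracket x (a *: y) = a *: lie_bracket x y.
Proof. by rewrite /lie_bracket scalerBr -scalemxAl -scalemxAr. Qed.

Lemma br0l y : lie_bracket 0 y = 0.
Proof. by rewrite /lie_bracket mul0mx mulmx0 subrr. Qed.
Lemma br0r y : lie_bracket y 0 = 0.
Proof. by rewrite /lie_bracket mul0mx mulmx0 subrr. Qed.

Lemma br_suml I (r : seq I) (P : pred I) (F : I -> 'M[C]_N) y :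
  lie_bracket (\sum_(i <- r | P i) F i) y = \sum_(i <- r | P i) lie_bracket (F i) y.
Proof.
elim/big_rec2: _ => [|i u v _ <-]; first by rewrite br0l.
by rewrite brDl.
Qed.

Lemma br_sumr I (r : seq I) (P : pred I) (F : I -> 'M[C]_N) y :
  lie_bracket y (\sum_(i <- r | P i) F i) = \sum_(i <- r | P i) lie_bracket y (F i).
Proof.
elim/big_rec2: _ => [|i u v _ <-]; first by rewrite br0r.
by rewrite brDr.
Qed.

Lemma br_span (vs : seq 'M[C]_N) W x y :
  (forall u v, u \in vs -> v \in vs -> lie_bracket u v \in W) ->
  x \in <<vs>>%VS -> y \in <<vs>>%VS -> lie_bracket x y \in W.
Proof.
move=> H xin yin.
rewrite (coord_span (X := in_tuple vs) xin) (coord_span (X := in_tuple vs) yin).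
rewrite br_suml; apply: rpred_sum => i _; rewrite brZl; apply: rpredZ.
rewrite br_sumr; apply: rpred_sum => j _; rewrite brZr; apply: rpredZ.
by apply: H; apply: mem_nth.
Qed.

Lemma br_derived S x y : x \in S -> y \in S -> lie_bracket x y \in derived S.
Proof.
move=> xS yS; rewrite -(span_basis (vbasisP S)) in xS yS.
apply: br_span xS yS => u v uS vS.
apply: memv_span; apply/allpairsP; exists (u, v) => //.
Qed.

Lemma derived_sub S W :
  (forall x y, x \in S -> y \in S -> lie_bracket x y \in W) -> (derived S <= W)%VS.
Proof.
move=> H; apply/span_subvP => z /allpairsP [[u v] /= [uS vS ->]].
by apply: H; apply: vbasis_mem.
Qed.

End Bracket.

Section Deltas.
Variable N : nat.
Local Notation E := (@delta_mx C N N).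

Lemma EE u v w : E u v *m E v w = E u w.
Proof. exact: mul_delta_mx. Qed.
Lemma EE0 u v v' w : v != v' -> E u v *m E v' w = 0.
Proof. exact: mul_delta_mx_0. Qed.

Lemma E_neq0 u v : E u v != 0.
Proof.
apply/eqP => /matrixP /(_ u v); rewrite !mxE !eqxx /=.
by move/eqP; rewrite oner_eq0.
Qed.

Lemma mulEl u v (A : 'M[C]_N) i j : (E u v *m A) i j = (i == u)%:R * A v j.
Proof.
rewrite mxE (bigD1 v) //= big1 ?addr0; first by rewrite mxE eqxx andbT.
by move=> k /negbTE nk; rewrite mxE nk andbF mul0r.
Qed.

Lemma mulEr u v (A : 'M[C]_N) i j : (A *m E u v) i j = A i u * (j == v)%:R.
Proof.
rewrite mxE (bigD1 u) //= big1 ?addr0; first by rewrite mxE eqxx.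
by move=> k /negbTE nk; rewrite mxE nk mulr0.
Qed.

Lemma PyQ u v (y : 'M[C]_N) : E u u *m y *m E v v = y u v *: E u v.
Proof.
apply/matrixP => i j; rewrite mulEr mulEl !mxE.
by case: (i == u); case: (j == v); rewrite ?mulr0 ?mul0r ?mulr1 ?mul1r.
Qed.

Lemma two_neq0 : (2 : C) != 0.
Proof. by rewrite pnatr_eq0. Qed.

Lemma PyQ_br u v (y : 'M[C]_N) : u != v ->
  let z := lie_bracket (E u u) (lie_bracket y (E v v)) in
  E u u *m y *m E v v = 2^-1 *: (z + lie_bracket (E u u) z).
Proof.
move=> uv z.
have PQ : E u u *m E v v = 0 by apply: EE0.
have QP : E v v *m E u u = 0 by apply: EE0; rewrite eq_sym.
have PP : E u u *m E u u = E u u by apply: EE.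
have Hz : z = E u u *m y *m E v v + E v v *m y *m E u u.
  rewrite /z /lie_bracket mulmxBr mulmxBl !mulmxA PQ mul0mx subr0.
  rewrite -!mulmxA QP mulmx0 sub0r opprK.
  by rewrite !mulmxA.
have Hz2 : lie_bracket (E u u) z = E u u *m y *m E v v - E v v *m y *m E u u.
  rewrite Hz /lie_bracket mulmxDr mulmxDl !mulmxA PP PQ mul0mx !mul0mx addr0.
  rewrite -!mulmxA QP PP !mulmx0 add0r.
  by rewrite !mulmxA.
rewrite Hz2 Hz addrACA subrr addr0 -mulr2n -[X in _ *: X]scaler_nat scalerA mulVf ?scale1r //.
exact: two_neq0.
Qed.

End Deltas.

Section Borel.
Variable N : nat.
Local Notation E := (@delta_mx C N N).
Variable b : {vspace 'M[C]_N}.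
Hypothesis Hsub : is_lie_subalgebra b.
Hypothesis Hdiag : contains_diagonal_cartan b.

Lemma Euu_in u : E u u \in b.
Proof.
have -> : E u u = diag_mx (delta_mx 0 u).
  apply/matrixP => i j; rewrite !mxE eqxx /=.
  by case: (i =P u) => [->|]; case: (j =P u) => [->|]; rewrite ?eqxx //= ?mulr0n;
     move=> ? ; case: eqP => // ?; subst.
exact: Hdiag.
Qed.

Lemma comp_in u v y : u != v -> y \in b -> y u v *: E u v \in b.
Proof.
move=> uv yb; rewrite -PyQ (PyQ_br _ uv); apply: rpredZ.
have zb : lie_bracket (E u u) (lie_bracket y (E v v)) \in b.
  by apply: Hsub; [exact: Euu_in | apply: Hsub => //; exact: Euu_in].
by apply: rpredD => //; apply: Hsub => //; exact: Euu_in.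
Qed.

Lemma E_in_of u v y : u != v -> y \in b -> y u v != 0 -> E u v \in b.
Proof.
move=> uv yb nz; have := comp_in uv yb.
by move/(rpredZ (y u v)^-1); rewrite scalerA mulVf // scale1r.
Qed.

Lemma not_both u v : is_solvable b -> u != v -> E u v \in b -> E v u \in b -> False.
Proof.
move=> [k Hk] uv e f.
have key : forall k, [/\ E u v \in iter k (@derived N) b, E v u \in iter k (@derived N) b
                     & E u u - E v v \in iter k (@derived N) b].
  elim => [|m [e1 f1 h1]] /=.
    by split => //; apply: rpredB; exact: Euu_in.
  have ef : lie_bracket (E u v) (E v u) = E u u - E v v.
    by rewrite /lie_bracket !EE.
  have he : lie_bracket (E u u - E v v) (E u v) = 2 *: E u v.
    have vu : v != u by rewrite eq_sym.
    rewrite /lie_bracket mulmxBl mulmxBr !EE !EE0 //.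
    by rewrite subr0 sub0r opprK -mulr2n scaler_nat.
  have fh : lie_bracket (E v u) (E u u - E v v) = 2 *: E v u.
    have vu : v != u by rewrite eq_sym.
    rewrite /lie_bracket mulmxBl mulmxBr !EE !EE0 //.
    by rewrite subr0 sub0r opprK -mulr2n scaler_nat.
  split.
  - have := br_derived h1 e1; rewrite he => /(rpredZ 2^-1).
    by rewrite scalerA mulVf ?two_neq0 // scale1r.
  - have := br_derived f1 h1; rewrite fh => /(rpredZ 2^-1).
    by rewrite scalerA mulVf ?two_neq0 // scale1r.
  - by rewrite -ef; apply: br_derived.
have [e1 _ _] := key k; move: e1; rewrite Hk memv0 => /eqP E0.
by have := E_neq0 u v; rewrite E0 eqxx.
Qed.

End Borel.

Section Fsp.
Variable N : nat.
Local Notation E := (@delta_mx C N N).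

Definition Fsp (P : rel 'I_N) : {vspace 'M[C]_N} :=
  <<[seq E uv.1 uv.2 | uv <- enum [pred uv : 'I_N * 'I_N | P uv.1 uv.2]]>>%VS.

Lemma memFsp_in (P : rel 'I_N) (M : 'M[C]_N) :
  (forall u v, ~~ P u v -> M u v = 0) -> M \in Fsp P.
Proof.
move=> H; rewrite [M]matrix_sum_delta; apply: rpred_sum => u _.
apply: rpred_sum => v _; have [Puv|nP] := boolP (P u v).
  apply: rpredZ; apply: memv_span; apply/mapP; exists (u, v) => //.
  by rewrite mem_enum.
by rewrite H // scale0r rpred0.
Qed.

Lemma memFsp_out (P : rel 'I_N) (M : 'M[C]_N) u v :
  M \in Fsp P -> ~~ P u v -> M u v = 0.
Proof.
rewrite /Fsp; set X := map _ _ => MX nP.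
rewrite (coord_span (X := in_tuple X) MX) summxE.
apply: big1 => i _; rewrite mxE.
have : (in_tuple X)`_i \in X by apply: mem_nth; exact: ltn_ord.
case/mapP => [[u' v']]; rewrite mem_enum inE /= => Puv ->.
rewrite mxE; case: (u =P u') => [eu|]; last by rewrite mulr0.
case: (v =P v') => [ev|]; last by rewrite andbF mulr0.
by subst; rewrite Puv in nP.
Qed.

Lemma Fsp_false (M : 'M[C]_N) : M \in Fsp (fun _ _ => false) -> M = 0.
Proof. by move=> MF; apply/matrixP => u v; rewrite mxE (memFsp_out MF). Qed.

Variable R : rel 'I_N.
Hypothesis Rirr : forall u, ~~ R u u.
Hypothesis Rtr : forall u v w, R u v -> R v w -> R u w.

Definition grk u := #|[set z | R z u]|.

Lemma grk_lt u v : R u v -> (grk u < grk v)%N.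
Proof.
move=> Ruv; apply: proper_card; apply/properP; split.
  by apply/subsetP => z; rewrite !inE => Rz; apply: Rtr Rz Ruv.
by exists u; rewrite !inE ?Ruv ?(negbTE (Rirr u)).
Qed.

Lemma grk_le u : (grk u <= N)%N.
Proof. by rewrite /grk; apply: leq_trans (max_card _) _; rewrite card_ord. Qed.

Definition Pk (k : nat) : rel 'I_N :=
  fun u v => ((k == 0)%N && (u == v)) || (R u v && (grk u + k <= grk v)%N).

Lemma Pk_neq k u v : u != v -> Pk k u v -> R u v && (grk u + maxn k 1 <= grk v)%N.
Proof.
move=> /negbTE uv; rewrite /Pk uv andbF /= => /andP [Ruv le].
rewrite Ruv /=; have := grk_lt Ruv; rewrite /maxn; case: ifP => _; lia.
Qed.

Lemma Pk_eq k u : Pk k u u -> k = 0%N.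
Proof.
rewrite /Pk eqxx andbT (negbTE (Rirr u)) orbF.
by move/eqP.
Qed.

Lemma br_Pk k M M' : M \in Fsp (Pk k) -> M' \in Fsp (Pk k) ->
  lie_bracket M M' \in Fsp (Pk k.+1).
Proof.
move=> HM HM'; apply: memFsp_in => u v nP.
have term : forall (A B : 'M[C]_N) w, A \in Fsp (Pk k) -> B \in Fsp (Pk k) ->
    (u != w) || (w != v) -> A u w * B w v = 0.
  move=> A B w HA HB nw.
  have [Puw|nPuw] := boolP (Pk k u w); last by rewrite (memFsp_out HA nPuw) mul0r.
  have [Pwv|nPwv] := boolP (Pk k w v); last by rewrite (memFsp_out HB nPwv) mulr0.
  exfalso; move/negP: nP; apply.
  have [uw|euw] := boolP (u != w).
    have /andP [Ruw le1] := Pk_neq uw Puw.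
    have [wv|ewv] := boolP (w != v).
      have /andP [Rwv le2] := Pk_neq wv Pwv.
      by apply/orP; right; rewrite (Rtr Ruw Rwv) /=; lia.
    move/negPn/eqP: ewv => ewv; subst w.
    have k0 := Pk_eq Pwv; subst k.
    by apply/orP; right; rewrite Ruw /=; lia.
  move/negPn/eqP: euw => euw; subst w.
  move: nw; rewrite eqxx /= => wv.
  have k0 := Pk_eq Puw; subst k.
  have /andP [Rwv le2] := Pk_neq wv Pwv.
  by apply/orP; right; rewrite Rwv /=; lia.
rewrite /lie_bracket !mxE.
have [uv|euv] := boolP (u != v).
  rewrite !big1 ?subrr // => w _; rewrite ?mxE; apply: term => //;
    by case: (u =P w) => // <-; rewrite uv orbT.
move/negPn/eqP: euv => euv; subst v.
rewrite (bigD1 u) //= [X in _ - X](bigD1 u) //= !big1 ?addr0.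
- by rewrite mulrC subrr.
- by move=> w wu; apply: term => //; rewrite eq_sym wu.
- by move=> w wu; apply: term => //; rewrite eq_sym wu.
Qed.

Lemma iter_Pk k : (iter k (@derived N) (Fsp (Pk 0)) <= Fsp (Pk k))%VS.
Proof.
elim: k => [|k IH] /=; first exact: subvv.
apply: derived_sub => x y xS yS; apply: br_Pk; exact: (subvP IH).
Qed.

Lemma Fsp_solvable : is_solvable (Fsp (Pk 0)).
Proof.
exists N.+1; apply/eqP; rewrite -subv0; apply/subvP => x /(subvP (iter_Pk _)) xin.
rewrite memv0; apply/eqP; apply/matrixP => u v; rewrite mxE.
apply: (memFsp_out xin); rewrite /Pk /=; apply/negP => /andP [_].
by have := grk_le v; lia.
Qed.

Lemma Fsp_lie : is_lie_subalgebra (Fsp (Pk 0)).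
Proof.
move=> x y xS yS; have := br_Pk xS yS => H.
apply: memFsp_in => u v nP; apply: (memFsp_out H).
apply: contra nP; rewrite /Pk /= => /andP [Ruv le]; rewrite Ruv /=; apply/orP; right; lia.
Qed.

End Fsp.

Section Total.
Variable N : nat.
Local Notation E := (@delta_mx C N N).
Variable b : {vspace 'M[C]_N}.
Hypothesis Hb : is_borel b.
Hypothesis Hdiag : contains_diagonal_cartan b.

Definition Tb (u v : 'I_N) := (u != v) && (E u v \in b).

Lemma Tb_irr u : ~~ Tb u u.
Proof. by rewrite /Tb eqxx. Qed.

Lemma Tb_trans u v w : Tb u v -> Tb v w -> Tb u w.
Proof.
case: Hb => Hsub Hsolv _.
case/andP => uv euv /andP [vw evw].
have uw : u != w.
  apply/eqP => e; subst w; apply: (not_both Hdiag Hsolv uv euv evw).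
rewrite /Tb uw /=.
have -> : E u w = lie_bracket (E u v) (E v w).
  by rewrite /lie_bracket EE EE0 ?subr0 // eq_sym.
exact: Hsub.
Qed.

Lemma Tb_total u v : u != v -> Tb u v || Tb v u.
Proof.
move=> uv; apply/negPn/negP; rewrite negb_or => /andP [nuv nvu].
case: Hb => Hsub Hsolv Hmax.
pose R x y := Tb x y || (((x == u) || Tb x u) && ((y == v) || Tb v y)).
have Rirr : forall x, ~~ R x x.
  move=> x; rewrite /R (negbTE (Tb_irr x)) /=; apply/negP.
  case/andP => /orP [/eqP ex|xu] /orP [/eqP ey|vx].
  - by subst; rewrite eqxx in uv.
  - by subst; rewrite vx in nvu.
  - by subst; rewrite xu in nvu.
  - by rewrite (Tb_trans vx xu) in nvu.
have le_u : forall x y, (x == u) || Tb x u -> Tb y x -> (y == u) || Tb y u.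
  move=> x y /orP [/eqP ->|xu] yx; first by rewrite yx orbT.
  by rewrite (Tb_trans yx xu) orbT.
have ge_v : forall x y, (x == v) || Tb v x -> Tb x y -> (y == v) || Tb v y.
  move=> x y /orP [/eqP ->|vx] xy; first by rewrite xy orbT.
  by rewrite (Tb_trans vx xy) orbT.
have Rtr : forall x y z, R x y -> R y z -> R x z.
  move=> x y z; rewrite /R.
  case/orP => [Txy|/andP [xu yv]]; case/orP => [Tyz|/andP [yu zv]].
  - by rewrite (Tb_trans Txy Tyz).
  - by rewrite (le_u _ _ yu Txy) zv orbT.
  - by rewrite xu (ge_v _ _ yv Tyz) orbT.
  - exfalso; apply: (negP (Rirr v)); rewrite /R.
    apply/orP; right; rewrite eqxx andbT.
    move: yu yv => /orP [/eqP ->|yu] /orP [/eqP yv|vy].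
    + by subst; rewrite eqxx in uv.
    + by rewrite vy in nvu.
    + by subst; rewrite yu orbT.
    + by rewrite (Tb_trans vy yu) orbT.
pose b' := Fsp (Pk R 0).
have bb' : (b <= b')%VS.
  apply/subvP => y yb; apply: memFsp_in => x z nP.
  apply/eqP; apply: contraNT nP => nz.
  have [exz|xz] := eqVneq x z; first by rewrite /Pk exz /= eqxx.
  have Txz : Tb x z by rewrite /Tb xz /=; exact: (E_in_of Hsub Hdiag xz yb nz).
  have Rxz : R x z by rewrite /R Txz.
  by rewrite /Pk Rxz /=; apply/orP; right; have := grk_lt Rirr Rtr Rxz; lia.
have eq := Hmax b' (Fsp_lie Rirr Rtr) (Fsp_solvable Rirr Rtr) bb'.
have : E u v \in b'.
  apply: memFsp_in => x z nP; rewrite mxE.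
  case: (x =P u) => [ex|]; last by [].
  case: (z =P v) => [ez|]; last by [].
  subst; exfalso; move/negP: nP; apply.
  have Ruv : R u v by rewrite /R !eqxx orbT.
  by rewrite /Pk Ruv /=; apply/orP; right; have := grk_lt Rirr Rtr Ruv; lia.
by rewrite eq => Euv; rewrite /Tb uv Euv in nuv.
Qed.

End Total.

Section Eigen.
Variable s : nat.
Variable T : rel 'I_s.
Hypothesis Tirr : forall u, ~~ T u u.
Hypothesis Ttr : forall u v w, T u v -> T v w -> T u w.
Hypothesis Ttot : forall u v, u != v -> T u v || T v u.
Variable d : 'I_s -> C.
Hypothesis dinj : injective d.
Hypothesis dsh : forall a b, d a - d b + 1 != 0.

Definition ymx : 'M[C]_s := \matrix_(a, b) ((a == b)%:R * d a + (T a b)%:R).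

Variable c : 'I_s.

Lemma dsub_neq0 a : a != c -> d c - d a != 0.
Proof. by move=> ac; rewrite subr_eq0; apply/eqP => /dinj e; rewrite e eqxx in ac. Qed.

Definition w a := (d c - d a + 1) / (d c - d a).
Definition ell b := if b == c then 1 else if T c b then
   (\prod_(a | T c a && T a b) w a) / (d c - d b) else 0.
Definition Pp b := \prod_(a | T c a && (T a b || (a == b))) w a.
Definition Ss b := \sum_(a | T a b || (a == b)) ell a.

Lemma w_neq0 a : a != c -> w a != 0.
Proof. by move=> ac; rewrite /w mulf_neq0 // invr_eq0 dsub_neq0. Qed.

Lemma Tasym u v : T u v -> T v u -> False.
Proof. by move=> h1 h2; have := Ttr h1 h2; rewrite (negbTE (Tirr u)). Qed.

Lemma Tneq u v : T u v -> u != v.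
Proof. by move=> h; apply/eqP => e; subst; rewrite (negbTE (Tirr v)) in h. Qed.

Lemma ell0 a : ~~ ((a == c) || T c a) -> ell a = 0.
Proof. by rewrite negb_or /ell => /andP [/negbTE -> /negbTE ->]. Qed.

Lemma prefix b : (b == c) || T c b -> Ss b = Pp b.
Proof.
have [k] := ubnP (grk T b); elim: k b => [|k IH] b //= hk hb.
have [ebc|nbc] := eqVneq b c.
  subst b; rewrite /Ss /Pp big_pred0; last first.
    by move=> a; case: (a =P c) => [->|_]; rewrite ?(negbTE (Tirr c)) //= orbF;
      apply/negP => /andP [h1 h2]; apply: (Tasym h1 h2).
  rewrite (bigD1 c) /= ?eqxx ?orbT // big1 ?addr0; first by rewrite /ell eqxx.
  move=> a /andP [h1 h2]; rewrite ell0 //; apply/norP; split => //.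
  by move: h1; rewrite (negbTE h2) orbF => h1; apply/negP => h3; apply: (Tasym h1 h3).
move: hb; rewrite (negbTE nbc) /= => Tcb.
pose b' := [arg max_(a > c | T a b) grk T a].
have [b'0 [Tb'b maxb]] : exists b'0, T b'0 b /\ (forall a, T a b -> (a == b'0) || T a b'0).
  rewrite /b'; case: (@arg_maxnP _ c (fun a => T a b) (grk T) Tcb) => /= a Tab Hmax; exists a; split => // a' Ta'b.
  have [ea|na] := eqVneq a' a; first by rewrite ea; apply/orP; left. 
  case/orP: (Ttot na) => // Taa; exfalso.
  have := Hmax a' Ta'b; have := grk_lt Tirr Ttr Taa; lia.
have key : forall a, a != b -> (T a b || (a == b)) = (T a b'0 || (a == b'0)).
  move=> a ab; rewrite (negbTE ab) orbF; apply/idP/idP.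
    by move/maxb; rewrite orbC.
  by case/orP => [h|/eqP ->] //; apply: Ttr h Tb'b.
have key2 : forall a, T a b = (T a b'0 || (a == b'0)).
  move=> a; have [eab|ab] := eqVneq a b; last by rewrite -key // (negbTE ab) orbF.
  subst a; rewrite (negbTE (Tirr b)); apply/esym/negbTE; rewrite negb_or.
  apply/andP; split; first by apply/negP => h; apply: (Tasym h Tb'b).
  by apply/eqP => e; rewrite e (negbTE (Tirr b'0)) in Tb'b.
have cb' : (b'0 == c) || T c b'0 by rewrite eq_sym; apply: maxb.
have IH' := IH b'0 _ cb'.
have hk' : (grk T b'0 < k)%N by have := grk_lt Tirr Ttr Tb'b; lia.
rewrite /Ss (bigD1 b) /= ?eqxx ?orbT //.
rewrite (eq_bigl (fun a => T a b'0 || (a == b'0))); last first.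
  move=> a; rewrite andbC; case: (a =P b) => [->|/eqP ab] /=; first by rewrite -key2 (negbTE (Tirr b)).
  by rewrite orbF key2.
rewrite -/(Ss b'0) (IH' hk').
have -> : ell b = Pp b'0 / (d c - d b).
  rewrite /ell (negbTE nbc) Tcb /Pp; congr (_ / _).
  by apply: eq_bigl => a; rewrite key2.
have -> : Pp b = w b * Pp b'0.
  rewrite /Pp (bigD1 b) /= ?Tcb ?eqxx ?orbT //; congr (_ * _).
  apply: eq_bigl => a; rewrite -andbA; case: (a =P b) => [->|/eqP ab] /=.
    by rewrite andbF -key2 (negbTE (Tirr b)) andbF.
  by rewrite orbF andbT key2.
have nz := dsub_neq0 nbc.
by rewrite /w mulrDl divff // mul1r mulrDl mul1r addrC mulrC.
Qed.

Lemma prefix0 b : T b c -> Ss b = 0.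
Proof.
move=> Tbc; apply: big1 => a h; apply: ell0; apply/norP; split.
  apply/eqP => e; rewrite e in h; case/orP: h => [h|/eqP e'].
    by apply: (Tasym h Tbc).
  by rewrite e' (negbTE (Tirr b)) in Tbc.
apply/negP => Tca; case/orP: h => [h|/eqP e].
  by apply: (Tasym (Ttr Tca h) Tbc).
by rewrite e in Tca; apply: (Tasym Tca Tbc).
Qed.

Lemma sumT b : \sum_(a | T a b) ell a = Ss b - ell b.
Proof.
rewrite /Ss [X in _ = X - _](bigD1 b) /= ?eqxx ?orbT // [ell b + _]addrC addrK.
apply: eq_bigl => a; case: (a =P b) => [->|/eqP ab] /=.
  by rewrite (negbTE (Tirr b)).
by rewrite orbF andbT.
Qed.

Lemma eig b : \sum_a ell a * ymx a b = d c * ell b.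
Proof.
have -> : \sum_a ell a * ymx a b = ell b * d b + \sum_(a | T a b) ell a.
  rewrite (bigD1 b) //= mxE eqxx (negbTE (Tirr b)) mul1r addr0; congr (_ + _).
  rewrite big_mkcond [RHS]big_mkcond /=; apply: eq_bigr => a _.
  case: (a =P b) => [->|/eqP ab] /=; first by rewrite (negbTE (Tirr b)).
  rewrite mxE (negbTE ab) mul0r add0r.
  by case: (T a b); rewrite ?mulr1 ?mulr0.
rewrite sumT.
have [ebc|nbc] := eqVneq b c.
  subst b; rewrite prefix ?eqxx // /Pp big_pred0 /ell ?eqxx.
    by rewrite mul1r mulr1 subrr addr0.
  move=> a; case: (a =P c) => [->|_]; rewrite ?(negbTE (Tirr c)) //= orbF.
  by apply/negP => /andP [h1 h2]; apply: (Tasym h1 h2).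
case/orP: (Ttot nbc) => [Tbc|Tcb].
  by rewrite prefix0 // ell0 ?mulr0 ?mul0r ?subr0 ?addr0 //; apply/norP; split => //;
    apply/negP => h; apply: (Tasym h Tbc).
rewrite prefix ?Tcb ?orbT //.
have -> : Pp b = w b * (\prod_(a | T c a && T a b) w a).
  rewrite /Pp (bigD1 b) /= ?Tcb ?eqxx ?orbT //; congr (_ * _).
  apply: eq_bigl => a; case: (a =P b) => [->|/eqP ab] /=.
    by rewrite (negbTE (Tirr b)) !andbF.
  by rewrite orbF andbT.
rewrite /ell (negbTE nbc) Tcb.
set P := \prod_(a | _) _.
have nz := dsub_neq0 nbc.
rewrite /w /=; field.
by [].
Qed.

Lemma left_eig (m : 'I_s) : exists L : 'rV[C]_s,
  L *m ymx = d c *: L /\ ((c == m) || T c m -> L 0 m != 0).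
Proof.
exists (\row_a ell a); split.
  apply/rowP => b; rewrite !mxE; rewrite -eig; apply: eq_bigr => a _; rewrite mxE //.
rewrite mxE /ell; case: (m =P c) => [_ |/eqP mc]; first by rewrite oner_eq0.
rewrite eq_sym (negbTE mc) /= => Tcm; rewrite Tcm.
rewrite mulf_neq0 // ?invr_eq0 ?dsub_neq0 //.
by apply/prodf_neq0 => a /andP [Tca _]; apply: w_neq0; rewrite eq_sym; apply: Tneq.
Qed.

End Eigen.

Section Q.
Variable s : nat.
Variable T : rel 'I_s.
Hypothesis Tirr : forall u, ~~ T u u.
Hypothesis Ttr : forall u v w, T u v -> T v w -> T u w.
Hypothesis Ttot : forall u v, u != v -> T u v || T v u.
Variable d : 'I_s -> C.
Hypothesis dinj : injective d.
Hypothesis dsh : forall a b, d a - d b + 1 != 0.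

Local Notation y := (ymx T d).

Lemma powL (L : 'rV[C]_s) (Y : 'M[C]_s) a : L *m Y = a *: L -> forall j, L *m (Y ^+ j) = a ^+ j *: L.
Proof.
move=> H; elim => [|j IH]; first by rewrite expr0 scale1r mulmx1.
by rewrite exprSr mulmxA IH -scalemxAl H scalerA exprSr.
Qed.

Lemma powR (K : 'cV[C]_s) (Y : 'M[C]_s) a : Y *m K = a *: K -> forall j, (Y ^+ j) *m K = a ^+ j *: K.
Proof.
move=> H; elim => [|j IH]; first by rewrite expr0 scale1r mul1mx.
by rewrite exprS -mulmxA IH -scalemxAr H scalerA exprS mulrC.
Qed.

Let T' := fun a b => T b a.
Lemma T'irr u : ~~ T' u u. Proof. exact: Tirr. Qed.
Lemma T'tr u v w : T' u v -> T' v w -> T' u w.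
Proof. by move=> h1 h2; apply: Ttr h2 h1. Qed.
Lemma T'tot u v : u != v -> T' u v || T' v u.
Proof. by move=> uv; rewrite /T' orbC; apply: Ttot. Qed.

Lemma ymxT : ymx T' d = y^T.
Proof.
apply/matrixP => a b; rewrite !mxE /T'; case: (a =P b) => [->|/eqP ab]; first by rewrite eqxx.
by rewrite eq_sym (negbTE ab) !mul0r.
Qed.

Lemma root_all (m : 'I_s) (cf : nat -> C) :
  (forall b, \sum_(j < s) cf j * (y ^+ j) m b = 0) ->
  (forall a, \sum_(j < s) cf j * (y ^+ j) a m = 0) ->
  forall c, (\poly_(j < s) cf j).[d c] = 0.
Proof.
move=> Hrow Hcol c; rewrite horner_poly.
have [cm|mc] : ((c == m) || T c m) \/ T m c.
  case: (c =P m) => [->|/eqP cm]; first by left.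
  by case/orP: (Ttot cm) => h; [left; rewrite h orbT | right].
  have [L [HL Lm]] := left_eig Tirr Ttr Ttot dinj dsh c m.
  have HLj := powL HL.
  have : \sum_(a < s) L 0 a * (\sum_(j < s) cf j * (y ^+ j) a m) = 0.
    by apply: big1 => a _; rewrite Hcol mulr0.
  under eq_bigr do rewrite mulr_sumr.
  rewrite exchange_big /=.
  under eq_bigr => j _.
    under eq_bigr do rewrite mulrCA.
    rewrite -mulr_sumr.
    have -> : \sum_(i < s) L 0 i * (y ^+ j) i m = (L *m y ^+ j) 0 m by rewrite mxE.
    rewrite HLj mxE mulrA.
    over.
  rewrite -mulr_suml => /eqP; rewrite mulf_eq0 (negbTE (Lm cm)) orbF => /eqP H.
  exact: H.
have [L [HL Lm]] := left_eig T'irr T'tr T'tot dinj dsh c m.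
have mc' : (c == m) || T' c m by rewrite /T' mc orbT.
have HL' : y *m L^T = d c *: L^T.
  by rewrite -(trmxK y) -trmx_mul -ymxT HL linearZ.
have HLj := powR HL'.
have : \sum_(b < s) (\sum_(j < s) cf j * (y ^+ j) m b) * L 0 b = 0.
  by apply: big1 => b _; rewrite Hrow mul0r.
under eq_bigr do rewrite mulr_suml.
rewrite exchange_big /=.
under eq_bigr => j _.
  under eq_bigr do rewrite -mulrA.
  rewrite -mulr_sumr.
  have -> : \sum_(i < s) (y ^+ j) m i * L 0 i = (y ^+ j *m L^T) m 0.
    by rewrite mxE; apply: eq_bigr => i _; rewrite mxE.
  rewrite HLj !mxE mulrA.
  over.
rewrite -mulr_suml => /eqP; rewrite mulf_eq0 (negbTE (Lm mc')) orbF => /eqP H.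
exact: H.
Qed.

Lemma Qlem (m : 'I_s) (cf : nat -> C) :
  (forall b, \sum_(j < s) cf j * (y ^+ j) m b = 0) ->
  (forall a, \sum_(j < s) cf j * (y ^+ j) a m = 0) ->
  forall j, (j < s)%N -> cf j = 0.
Proof.
move=> Hr Hc j js.
have Hroot := root_all Hr Hc.
set p := \poly_(j < s) cf j in Hroot.
suff p0 : p = 0 by have := coef_poly s cf j; rewrite js -/p p0 coef0.
apply/eqP; apply/negPn/negP => pn0.
have := max_poly_roots pn0 (rs := [seq d c | c <- enum 'I_s]).
rewrite size_map size_enum_ord.
have -> : all (root p) [seq d c | c <- enum 'I_s].
  by apply/allP => z /mapP [c _ ->]; apply/rootP; apply: Hroot.
rewrite (map_inj_uniq dinj) ?enum_uniq // => /(_ isT isT).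
by move=> H; have := leq_trans H (size_poly s cf); rewrite ltnn.
Qed.

End Q.

Section Deriv.
Variable K : nat.
Local Notation R := {mpoly C[K]}.
Variable k : 'I_K.

Definition Dmx m n (M : 'M[R]_(m, n)) : 'M[R]_(m, n) := map_mx (mderiv k) M.

Lemma DmxM m n p (A : 'M[R]_(m, n)) (B : 'M[R]_(n, p)) :
  Dmx (A *m B) = Dmx A *m B + A *m Dmx B.
Proof.
apply/matrixP => i j; rewrite !mxE raddf_sum -big_split /=.
by apply: eq_bigr => l _; rewrite mderivM !mxE.
Qed.

Lemma DmxD m n (A B : 'M[R]_(m, n)) : Dmx (A + B) = Dmx A + Dmx B.
Proof. by apply/matrixP => i j; rewrite !mxE mderivD. Qed.

Lemma Dmx1 n : Dmx (1%:M : 'M[R]_n) = 0.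
Proof.
apply/matrixP => i j; rewrite !mxE mderivMn.
by rewrite -mpolyC1 mderivC mul0rn.
Qed.

Lemma Dtr n (M : 'M[R]_n) : mderiv k (\tr M) = \tr (Dmx M).
Proof. by rewrite /mxtrace raddf_sum; apply: eq_bigr => i _; rewrite mxE. Qed.

Lemma mulmx_expr n (A : 'M[R]_n) a b : A ^+ a *m A ^+ b = A ^+ (a + b).
Proof. by rewrite mulmxE exprD. Qed.

Lemma trD n (A : 'M[R]_n) l j :
  \tr (Dmx (A ^+ j.+1) *m A ^+ l) = j.+1%:R * \tr (A ^+ (j + l) *m Dmx A).
Proof.
elim: j l => [|j IH] l.
  by rewrite expr1 mxtrace_mulC add0n mul1r.
rewrite exprSr -mulmxE DmxM mulmxDl mxtraceD -mulmxA.
rewrite mulmxE -exprS IH.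
rewrite -!mulmxE [X in _ + X]mxtrace_mulC mulmxA mulmx_expr.
rewrite (addnC l) !addSn addnS.
by rewrite -(addn1 j.+1) natrD mulrDl mul1r.
Qed.

Lemma trDpow n (A : 'M[R]_n) j :
  mderiv k (\tr (A ^+ j.+1)) = j.+1%:R * \tr (A ^+ j *m Dmx A).
Proof. by rewrite Dtr; have := trD A 0 j; rewrite expr0 mulmx1 addn0. Qed.


End Deriv.

Lemma mxvec_index_eq m n (a a' : 'I_m) (b b' : 'I_n) :
  (mxvec_index a b == mxvec_index a' b') = (a == a') && (b == b').
Proof.
apply/eqP/andP => [|[/eqP -> /eqP ->]] //.
by rewrite /mxvec_index => /cast_ord_inj /enum_rank_inj [-> ->].
Qed.

Lemma mderivXU K (k i : 'I_K) : mderiv k ('X_i : {mpoly C[K]}) = (i == k)%:R.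
Proof.
rewrite mderivX mnm1E; case: (i =P k) => [->|_] /=.
  have -> : (U_(k) - U_(k) = 0)%MM by apply/mnmP => l; rewrite mnmBE mnm0E subnn.
  by rewrite mpolyX0 scale1r.
by rewrite scale0r.
Qed.

Lemma map_meval_pow K (v : 'I_K -> C) n (A : 'M[{mpoly C[K]}]_n) j :
  map_mx (meval v) (A ^+ j) = (map_mx (meval v) A) ^+ j.
Proof.
elim: j => [|j IH]; first by rewrite !expr0 map_mx1.
by rewrite !exprS -!mulmxE map_mxM IH.
Qed.

Lemma dGZ_val N (p : GZindex N) (x : 'M[C]_N) (a b : 'I_N) (i j : 'I_N) :
  val p = (i, j) ->
  dGZ p x 0 (mxvec_index a b) = j.+1%:R * \sum_(a' < i.+1) \sum_(b' < i.+1)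
    ((ulsub i x) ^+ j) a' b' *
    ((widen_ord (ltn_ord i) b' == a) && (widen_ord (ltn_ord i) a' == b))%:R.
Proof.
move=> vp; rewrite /dGZ mxE /fGZ vp trDpow rmorphM rmorph_nat.
congr (_ * _); rewrite -trace_map_mx map_mxM map_meval_pow.
have -> : map_mx (meval (coords x)) (ulsub i (Defs.genmx N)) = ulsub i x.
  apply/matrixP => a' b'; rewrite !mxE mevalXU /coords mxvecE //.
rewrite /mxtrace; apply: eq_bigr => a' _; rewrite mxE; apply: eq_bigr => b' _.
rewrite !mxE mderivXU rmorph_nat mxvec_index_eq //.
Qed.

Lemma widen_eq m n (le : (m <= n)%N) (a b : 'I_m) :
  (widen_ord le a == widen_ord le b) = (a == b).
Proof. by apply/eqP/eqP => [/(congr1 val) /= h|->] //; apply: val_inj. Qed.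

Section Assemble.
Variable N : nat.
Variable T : rel 'I_N.
Hypothesis Tirr : forall u, ~~ T u u.
Hypothesis Ttr : forall u v w, T u v -> T v w -> T u w.
Hypothesis Ttot : forall u v, u != v -> T u v || T v u.
Variable d : 'I_N -> C.
Hypothesis dinj : injective d.
Hypothesis dsh : forall a b, d a - d b + 1 != 0.
Local Notation x := (ymx T d).

Section Block.
Variable i : 'I_N.
Let w := widen_ord (ltn_ord i).
Let Ti : rel 'I_i.+1 := fun a b => T (w a) (w b).
Let di : 'I_i.+1 -> C := fun a => d (w a).

Lemma ulsub_ymx : ulsub i x = ymx Ti di.
Proof. by apply/matrixP => a b; rewrite !mxE widen_eq. Qed.

Lemma Qblock (cf : nat -> C) :
  (forall b, \sum_(j < i.+1) cf j * (ulsub i x ^+ j) ord_max b = 0) ->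
  (forall a, \sum_(j < i.+1) cf j * (ulsub i x ^+ j) a ord_max = 0) ->
  forall j, (j < i.+1)%N -> cf j = 0.
Proof.
rewrite ulsub_ymx; apply: Qlem.
- by move=> u; apply: Tirr.
- by move=> u v z; apply: Ttr.
- by move=> u v uv; apply: Ttot; rewrite widen_eq.
- by move=> u v /dinj /(congr1 val) /= h; apply: val_inj.
- by move=> u v; apply: dsh.
Qed.

End Block.

Lemma widen_big (i k : 'I_N) (c : 'I_i.+1) : (i < k)%N ->
  (widen_ord (ltn_ord i) c == k) = false.
Proof. by move=> ik; apply/eqP => /(congr1 val) /=; have := ltn_ord c; lia. Qed.

Lemma dGZ_small (p : GZindex N) (i j a b k : 'I_N) : val p = (i, j) -> (i < k)%N ->
  (a == k) || (b == k) -> dGZ p x 0 (mxvec_index a b) = 0.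
Proof.
move=> vp ik hk; rewrite (dGZ_val _ _ _ vp); apply/eqP; rewrite mulf_eq0; apply/orP; right.
apply/eqP; apply: big1 => a' _; apply: big1 => b' _.
by case/orP: hk => /eqP ->; rewrite (widen_big _ ik) ?andbF ?mulr0.
Qed.

Lemma widen_max (i : 'I_N) (a' : 'I_i.+1) :
  (widen_ord (ltn_ord i) a' == i) = (a' == ord_max).
Proof. by apply/eqP/eqP => [/(congr1 val) /= h|->] //; apply: val_inj. Qed.

Lemma dGZ_row (p : GZindex N) (i j : 'I_N) (b' : 'I_i.+1) : val p = (i, j) ->
  dGZ p x 0 (mxvec_index (widen_ord (ltn_ord i) b') i) = j.+1%:R * (ulsub i x ^+ j) ord_max b'.
Proof.
move=> vp; rewrite (dGZ_val _ _ _ vp); congr (_ * _).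
rewrite (bigD1 ord_max) //= [X in _ + X]big1 ?addr0.
  rewrite (bigD1 b') //= [X in _ + X]big1 ?addr0; first by rewrite widen_max !eqxx mulr1.
  by move=> c cb; rewrite widen_eq (negbTE cb) mulr0.
move=> a' am; apply: big1 => c _; rewrite widen_max (negbTE am) andbF mulr0 //.
Qed.

Lemma dGZ_col (p : GZindex N) (i j : 'I_N) (a' : 'I_i.+1) : val p = (i, j) ->
  dGZ p x 0 (mxvec_index i (widen_ord (ltn_ord i) a')) = j.+1%:R * (ulsub i x ^+ j) a' ord_max.
Proof.
move=> vp; rewrite (dGZ_val _ _ _ vp); congr (_ * _).
rewrite (bigD1 a') //= [X in _ + X]big1 ?addr0.
  rewrite (bigD1 ord_max) //= [X in _ + X]big1 ?addr0; first by rewrite widen_max !eqxx mulr1.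
  by move=> c cb; rewrite widen_max (negbTE cb) mulr0.
move=> c ca; apply: big1 => e _; rewrite widen_eq (negbTE ca) andbF mulr0 //.
Qed.


Section BlockZero.
Variable c : GZindex N -> C.
Hypothesis E : forall a b, \sum_p c p * dGZ p x 0 (mxvec_index a b) = 0.
Variable i : 'I_N.
Hypothesis IHi : forall q : GZindex N, (i < (val q).1)%N -> c q = 0.

Let w := widen_ord (ltn_ord i).
Let G := ulsub i x.
Definition cfn (j : nat) := \sum_(q : GZindex N | ((val q).1 == i) && (nat_of_ord (val q).2 == j)) c q * j.+1%:R.

Lemma snd_le (q : GZindex N) : ((val q).2 <= (val q).1)%N.
Proof. exact: (valP q). Qed.

Lemma regroup (g : nat -> C) :
  \sum_(q : GZindex N | (val q).1 == i) c q * ((val q).2.+1%:R * g (val q).2) =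
  \sum_(j < i.+1) cfn j * g j.
Proof.
rewrite (@partition_big _ _ _ _ _ _ (fun q : GZindex N => (val q).1 == i) (fun q : GZindex N => (inord (val q).2 : 'I_i.+1)) xpredT) //.
apply: eq_bigr => j _; rewrite /cfn mulr_suml.
apply: eq_big => [q|q /andP [/eqP qi /eqP qj]].
  case: (boolP ((val q).1 == i)) => //= /eqP qi.
  have := snd_le q; rewrite qi => le.
  apply/eqP/eqP => [<-|qj]; first by rewrite inordK.
  by apply: val_inj; rewrite /= inordK.
have := snd_le q; rewrite qi => le.
have qj' : ((val q).2 : nat) = j by rewrite -qj inordK.
by rewrite qj' mulrA.
Qed.

Lemma split_sum (a b : 'I_N) (F : GZindex N -> C) :
  ((a == i) || (b == i)) ->
  (forall q, (val q).1 = i -> c q * dGZ q x 0 (mxvec_index a b) = F q) ->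
  \sum_q c q * dGZ q x 0 (mxvec_index a b) = \sum_(q : GZindex N | (val q).1 == i) F q.
Proof.
move=> hab HF; rewrite (bigID (fun q => (val q).1 == i)) /= addrC big1 ?add0r.
  by apply: eq_bigr => q /eqP qi; apply: HF.
move=> q nqi; case vq: (val q) => [iq jq].
have [lt|gt|eq] := ltngtP iq i.
- by rewrite (dGZ_small vq lt) ?mulr0.
- by rewrite IHi ?mul0r // vq.
- by move: nqi; rewrite vq /= (_ : iq = i) ?eqxx //; apply: val_inj.
Qed.

Lemma row_eq b' : \sum_(j < i.+1) cfn j * (G ^+ j) ord_max b' = 0.
Proof.
rewrite -(regroup (fun j => (G ^+ j) ord_max b')) -[RHS](E (w b') i).
apply: esym; apply: split_sum; first by rewrite eqxx orbT.
move=> q qi; case vq: (val q) => [iq jq]; rewrite vq /= in qi.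
move: vq; rewrite qi => vq; rewrite (dGZ_row _ vq) //.
Qed.

Lemma col_eq a' : \sum_(j < i.+1) cfn j * (G ^+ j) a' ord_max = 0.
Proof.
rewrite -(regroup (fun j => (G ^+ j) a' ord_max)) -[RHS](E i (w a')).
apply: esym; apply: split_sum; first by rewrite eqxx.
move=> q qi; case vq: (val q) => [iq jq]; rewrite vq /= in qi.
move: vq; rewrite qi => vq; rewrite (dGZ_col _ vq) //.
Qed.

Lemma block_zero (p : GZindex N) : (val p).1 = i -> c p = 0.
Proof.
move=> pi.
have cf0 := Qblock row_eq col_eq.
have := cf0 (val p).2; rewrite -pi ltnS snd_le => /(_ isT).
rewrite /cfn (big_pred1 p).
  move/eqP; rewrite mulf_eq0 pnatr_eq0 orbF => /eqP //.
move=> q /=; apply/andP/eqP => [[/eqP q1 /eqP q2]|->]; last by rewrite pi !eqxx.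
have e1 : (val q).1 = (val p).1 by rewrite q1 pi.
have e2 : (val q).2 = (val p).2 by apply: val_inj.
by apply: val_inj; rewrite [val q]surjective_pairing [val p]surjective_pairing e1 e2.
Qed.

End BlockZero.

Lemma sreg : strongly_regular x.
Proof.
move=> c H.
have E : forall a b, \sum_p c p * dGZ p x 0 (mxvec_index a b) = 0.
  move=> a b; have := congr1 (fun M : 'rV[C]_(N * N) => M 0 (mxvec_index a b)) H.
  by rewrite summxE mxE /=; under eq_bigr do rewrite mxE.
suff all : forall k (p : GZindex N), (N - k <= (val p).1)%N -> c p = 0.
  by move=> p; apply: (all N); lia.
elim=> [|k IH] p.
  by rewrite subn0 => h; have := ltn_ord (val p).1; lia.
case: (leqP (N - k) (val p).1) => [h _|h h']; first exact: IH.
apply: (block_zero E (i := (val p).1)) => // q qi; apply: IH; lia.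
Qed.

End Assemble.

Theorem proposition5p2 (n : nat) (b : {vspace 'M[C]_(n.+1)}) :
  is_borel b -> contains_diagonal_cartan b ->
  exists x : 'M[C]_(n.+1), x \in b /\ strongly_regular x.
Proof.
move=> Hb Hd.
pose d := fun u : 'I_n.+1 => ((2 * u)%N%:R : C).
have dinj : injective d.
  move=> u v /eqP; rewrite /d eqr_nat => /eqP h; apply: val_inj => /=; lia.
have dsh : forall a c, d a - d c + 1 != 0.
  move=> a c; apply/eqP => h.
  have : ((2 * a).+1)%:R = (2 * c)%N%:R :> C.
    by rewrite -addn1 natrD; apply/eqP; rewrite -subr_eq0 addrAC; apply/eqP.
  by move/eqP; rewrite eqr_nat => /eqP; lia.
exists (ymx (Tb b) d); split; last first.
  apply: sreg dinj dsh.
  - exact: Tb_irr.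
  - exact: Tb_trans Hb Hd.
  - exact: Tb_total Hb Hd.
have -> : ymx (Tb b) d = diag_mx (\row_u d u) + \matrix_(u, v) (Tb b u v)%:R.
  apply/matrixP => u v; rewrite !mxE; congr (_ + _).
  by case: (u =P v) => [->|_]; rewrite ?mul1r ?mul0r ?mulr1n ?mulr0n.
rewrite [X in _ + X]matrix_sum_delta; apply: rpredD; first exact: Hd.
apply: rpred_sum => u _; apply: rpred_sum => v _; rewrite mxE.
case Tuv: (Tb b u v); last by rewrite scale0r rpred0.
by apply: rpredZ; case/andP: Tuv.
Qed.
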